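(* Let $(\mathcal{F}_\alpha)_{\alpha<\omega_1}$ be a transfinite family, $\mathcal{A}\subset[\mathbb{N}]^{<\infty}$ hereditary and $P\subset\mathbb{N}$ infinite. Suppose that for every $\alpha<\omega_1$ there is an infinite $N_\alpha\subset P$ with $\mathcal{F}_\alpha^{N_\alpha}\subset\mathcal{A}$. Then there is an infinite $L\subset P$ such that $[L]^{<\infty}\subset\mathcal{A}$.
   Context: An approximating family assigns to each countable limit ordinal $\alpha$ finite sets $A_n(\alpha)\subset[0,\alpha)$, $n\in\mathbb{N}$, with $A_n(\alpha)\subset A_{n+1}(\alpha)$ and $\lim_n\max A_n(\alpha)=\alpha$. The transfinite family it defines: $\mathcal{F}_0=\{\emptyset\}$; $\mathcal{F}_{\beta+1}=\{\{n\}\cup E:n\in\mathbb{N},E\in\mathcal{F}_\beta\}\cup\{\emptyset\}$; for limit $\alpha$, $\mathcal{F}_\alpha=\{\emptyset\}\cup\{E\ne\emptyset:E\in\bigcup_{\beta\in A_{\min E}(\alpha)}\mathcal{F}_\beta\}$. For $N=\{n_1<n_2<\dots\}$, $\mathcal{F}^N=\{\{n_i:i\in E\}:E\in\mathcal{F}\}$. $[L]^{<\infty}$ denotes the finite subsets of $L$; hereditary = closed under subsets. *)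

(* Defs.v *)
(* countable ordinals are modelled by an abstract copy of omega_1. *)
From mathcomp Require Import all_boot finmap.
From Stdlib Require List.
Notation In := List.In.

Set Implicit Arguments.
Unset Strict Implicit.
Unset Printing Implicit Defensive.

Local Open Scope fset_scope.

(* (O, lt) is (order-isomorphic to) omega_1: a strict well-order which is
   uncountable and all of whose proper initial segments are countable.
   This characterizes omega_1 up to order isomorphism. *)
Definition is_omega1 (O : Type) (lt : O -> O -> Prop) : Prop :=
  (forall a, ~ lt a a) /\
  (forall a b c, lt a b -> lt b c -> lt a c) /\
  (forall a b, lt a b \/ a = b \/ lt b a) /\
  well_founded lt /\
  (~ exists f : O -> nat, forall x y, f x = f y -> x = y) /\
  (forall a, exists f : O -> nat,
          forall x y, lt x a -> lt y a -> f x = f y -> x = y).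

Definition is_zero_ord (O : Type) (lt : O -> O -> Prop) (a : O) : Prop :=
  forall b, ~ lt b a.

Definition is_succ_of (O : Type) (lt : O -> O -> Prop) (a b : O) : Prop :=
  lt b a /\ (forall c, lt b c -> ~ lt c a).

Definition is_limit_ord (O : Type) (lt : O -> O -> Prop) (a : O) : Prop :=
  ~ is_zero_ord lt a /\ ~ (exists b, is_succ_of lt a b).

(* A a n is the finite set A_n(a) (as a list) *)
Definition approximating_family (O : Type) (lt : O -> O -> Prop)
  (A : O -> nat -> List.list O) : Prop :=
  forall a, is_limit_ord lt a ->
    [/\ (forall n b, In b (A a n) -> lt b a),
        (forall n b, In b (A a n) -> In b (A a n.+1)),
        (forall n, A a n <> nil)
      & (* lim_n max A_n(a) = a *)
        (forall b, lt b a -> exists n0, forall n, n0 <= n ->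
            exists c, In c (A a n) /\ lt b c)].

(* F satisfies the defining transfinite recursion; by well-foundedness it
   is uniquely determined by A. *)
Definition is_transfinite_family (O : Type) (lt : O -> O -> Prop)
  (A : O -> nat -> List.list O) (F : O -> {fset nat} -> Prop) : Prop :=
  forall a,
    [/\ (is_zero_ord lt a -> forall E, F a E <-> E = fset0),
        (forall b, is_succ_of lt a b -> forall E,
            F a E <-> (E = fset0 \/ exists n E', F b E' /\ E = n |` E'))
      & (is_limit_ord lt a -> forall E,
            F a E <-> (E = fset0 \/
               (E <> fset0 /\ exists m, m \in E /\ (forall x, x \in E -> m <= x)
                   /\ exists b, In b (A a m) /\ F b E)))].

Definition hereditary (Acal : {fset nat} -> Prop) : Prop :=
  forall E E', Acal E -> E' `<=` E -> Acal E'.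

Definition infinite_set (P : nat -> Prop) : Prop :=
  forall m, exists n, m <= n /\ P n.

(* F^N subset of Acal, where N = {e 0 < e 1 < ...} *)
Definition spread_subset (e : nat -> nat) (F : {fset nat} -> Prop)
  (Acal : {fset nat} -> Prop) : Prop :=
  forall E, F E -> Acal [fset e i | i in E].

(* Main.v *)
Require Import Defs.
From mathcomp Require Import all_boot finmap.
From Stdlib Require Import Classical ClassicalEpsilon.
Set Implicit Arguments.
Unset Strict Implicit.
Local Open Scope fset_scope.

Definition shiftf (k : nat) (E : {fset nat}) : {fset nat} := [fset addn i k | i in E].

Lemma A_mono (O : Type) (lt : O -> O -> Prop) (A : O -> nat -> List.list O) a :
  approximating_family lt A -> is_limit_ord lt a ->
  forall n j b, In b (A a n) -> In b (A a (addn n j)).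
Proof.
move=> HA Ha n j b; case: (HA a Ha) => _ Hm _ _.
elim: j => [|j IH]; first by rewrite addn0.
by move=> /IH; rewrite addnS; apply: Hm.
Qed.

Lemma ord_cases (O : Type) (lt : O -> O -> Prop) a :
  is_zero_ord lt a \/ (exists b, is_succ_of lt a b) \/ is_limit_ord lt a.
Proof.
case: (classic (is_zero_ord lt a)) => H0; first by left.
case: (classic (exists b, is_succ_of lt a b)) => H1; first by right; left.
by right; right; split.
Qed.

Lemma F_empty (O : Type) (lt : O -> O -> Prop) (A : O -> nat -> List.list O) F :
  is_transfinite_family lt A F -> forall a, F a fset0.
Proof.
move=> HF a; case: (HF a) => H0 HS HL.
case: (ord_cases lt a) => [Z|[[b Sb]|L]].
- by apply/(H0 Z).
- by apply/(HS b Sb); left.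
- by apply/(HL L); left.
Qed.

Lemma F_shift (O : Type) (lt : O -> O -> Prop) (A : O -> nat -> List.list O) F :
  is_omega1 lt -> approximating_family lt A -> is_transfinite_family lt A F ->
  forall a E k, F a E -> F a (shiftf k E).
Proof.
move=> [_ [_ [_ [wf _]]]] HA HF a.
elim/(well_founded_ind wf): a => a IH E k.
case: (HF a) => H0 HS HL.
case: (ord_cases lt a) => [Z|[[b Sb]|L]].
- move/(H0 Z) => ->; apply/(H0 Z); apply/fsetP => x.
  rewrite inE; apply/negbTE/negP => /imfsetP [y]; by rewrite inE.
- move/(HS b Sb) => [->|[n [E' [FE' ->]]]].
    apply/(HS b Sb); left; apply/fsetP => x.
    rewrite inE; apply/negbTE/negP => /imfsetP [y]; by rewrite inE.
  apply/(HS b Sb); right; exists (addn n k), (shiftf k E'); split.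
    by apply: IH => //; case: Sb.
  by rewrite /shiftf imfsetU1.
- move/(HL L) => [->|[En0 [m [mE [mmin [b [Ab FbE]]]]]]].
    apply/(HL L); left; apply/fsetP => x.
    rewrite inE; apply/negbTE/negP => /imfsetP [y]; by rewrite inE.
  case: (HA a L) => Hlt _ _ _.
  apply/(HL L); right; split.
    move=> h; have : addn m k \in shiftf k E by apply/imfsetP; exists m.
    by rewrite h inE.
  exists (addn m k); split; first by apply/imfsetP; exists m.
  split.
    move=> x /imfsetP [y /= yE ->]; rewrite leq_add2r; exact: mmin.
  exists b; split; first exact: (A_mono HA L).
  apply: IH => //; exact: Hlt Ab.
Qed.
Lemma bound (O : Type) (lt : O -> O -> Prop) :
  is_omega1 lt -> forall f : nat -> O, exists d, forall n, lt (f n) d.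
Proof.
move=> [irr [tr [tot [wf [unc cnt]]]]] f.
apply: NNPP => nex; apply: unc.
have Hg : forall d, exists n, lt d (f n) \/ d = f n.
  move=> d; apply: NNPP => H; apply: nex; exists d => n.
  case: (tot (f n) d) => [//|[E|L]]; exfalso; apply: H; exists n; by [right|left].
pose g d := proj1_sig (constructive_indefinite_description _ (Hg d)).
have gP : forall d, lt d (f (g d)) \/ d = f (g d).
  move=> d; exact: (proj2_sig (constructive_indefinite_description _ (Hg d))).
pose h n := proj1_sig (constructive_indefinite_description _ (cnt (f n))).
have hP : forall n x y, lt x (f n) -> lt y (f n) -> h n x = h n y -> x = y.
  move=> n; exact: (proj2_sig (constructive_indefinite_description _ (cnt (f n)))).
pose c x := if excluded_middle_informative (x = f (g x)) then 0 else (h (g x) x).+1.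
exists (fun x => choice.pickle (@pair nat nat (g x) (c x))) => x y /(pcan_inj pickleK_inv) [eg ec].
move: ec; rewrite /c; case: excluded_middle_informative => ex;
  case: excluded_middle_informative => ey //.
- by move=> _; rewrite ex ey eg.
- move=> [] ehh; rewrite eg in ehh.
  case: (gP x) => [lx|//]; case: (gP y) => [ly|//].
  by apply: (hP (g y)) => //; rewrite -eg.
Qed.

Definition Hgood (O : Type) (F : O -> {fset nat} -> Prop) (Acal : {fset nat} -> Prop)
  (P : nat -> Prop) (a : O) (s : {fset nat}) : Prop :=
  exists e : nat -> nat, (forall i, e i < e i.+1) /\ (forall i, P (e i)) /\
    forall E, F a E -> Acal (s `|` [fset e i | i in E]).

Definition child (Acal : {fset nat} -> Prop) (P : nat -> Prop) (t s : {fset nat}) : Prop :=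
  exists n, P n /\ (forall x, x \in s -> x < n) /\ Acal (n |` s) /\ t = n |` s.

Lemma incr_ge (e : nat -> nat) : (forall i, e i < e i.+1) -> forall k, k <= e k.
Proof.
move=> He; elim=> [//|k IH]; exact: leq_ltn_trans IH (He k).
Qed.

Lemma max_ge (s : {fset nat}) x : x \in s -> x <= \max_(i <- s) i.
Proof. move=> xs; exact: (@leq_bigmax_seq _ _ xpredT id x). Qed.

Lemma main (O : Type) (lt : O -> O -> Prop)
  (A : O -> nat -> List.list O) (F : O -> {fset nat} -> Prop)
  (Acal : {fset nat} -> Prop) (P : nat -> Prop) (o0 : O) :
  is_omega1 lt ->
  approximating_family lt A ->
  is_transfinite_family lt A F ->
  forall s, Acc (child Acal P) s ->
  exists d, forall a, Hgood F Acal P a s -> lt a d \/ a = d.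
Proof.
move=> Hom HA HF s Hacc; elim: Hacc => {}s _ IH.
have Hn : forall n, exists d, forall a, child Acal P (n |` s) s ->
    Hgood F Acal P a (n |` s) -> lt a d \/ a = d.
  move=> n; case: (classic (child Acal P (n |` s) s)) => Hc.
    have [d Hd] := IH _ Hc; by exists d => a _; apply: Hd.
  by exists o0.
pose f n := proj1_sig (constructive_indefinite_description _ (Hn n)).
have fP : forall n a, child Acal P (n |` s) s ->
    Hgood F Acal P a (n |` s) -> lt a (f n) \/ a = f n.
  move=> n; exact: (proj2_sig (constructive_indefinite_description _ (Hn n))).
have [d Hd] := bound Hom f.
exists d.
have Hom' := Hom; move: Hom' => [irr [tr [tot [wf _]]]].
move=> a; elim/(well_founded_ind wf): a => a IHa Hg.
case: (tot a d) => [L|[E|L]]; [by left|by right|exfalso].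
case: (HF a) => H0 HS HL.
case: (ord_cases lt a) => [Z|[[b Sb]|La]].
- exact: (Z d L).
- move: Hg => [e [He [Pe HE]]].
  pose k := (\max_(i <- s) i).+1.
  have Hk : forall x, x \in s -> x < e k.
    move=> x xs; apply: (leq_ltn_trans (max_ge xs)); exact: incr_ge.
  have Fk : forall E, F b E -> F a (k |` E).
    by move=> E FE; apply/(HS b Sb); right; exists k, E.
  have Hch : child Acal P (e k |` s) s.
    exists (e k); split; first exact: Pe.
    split; first exact: Hk.
    split=> //.
    have := HE _ (Fk _ (F_empty HF b)).
    by rewrite fsetU0 imfset_fset1 fsetUC.
  have Hgb : Hgood F Acal P b (e k |` s).
    exists e; split=> //; split=> // E FE.
    have := HE _ (Fk _ FE).
    by rewrite imfsetU1 fsetUA [s `|` _]fsetUC.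
  have lbd : lt b d.
    case: (fP _ b Hch Hgb) => [h|->]; last exact: Hd.
    exact: tr h (Hd _).
  by case: Sb => _ /(_ d lbd).
- move: Hg => [e [He [Pe HE]]].
  case: (HA a La) => Hlt _ _ Happ.
  have [n0 Hn0] := Happ d L.
  have [c [cA dc]] := Hn0 n0 (leqnn n0).
  have Hgc : Hgood F Acal P c s.
    exists (fun i => e (addn i n0)); split.
      by move=> i; rewrite addSn; apply: He.
    split; first by move=> i; apply: Pe.
    move=> E FE.
    have -> : [fset e (addn i n0) | i in E] = [fset e i | i in shiftf n0 E].
      apply/fsetP => x; apply/imfsetP/imfsetP => /= [[y yE ->]|[y /imfsetP [z /= zE ->] ->]].
        by exists (addn y n0) => //; apply/imfsetP; exists y.
      by exists z.
    apply: HE; apply/(HL La).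
    case: (classic (E = fset0)) => [E0|En0]; first left.
      rewrite E0; apply/fsetP => x; rewrite inE.
      apply/negbTE/negP => /imfsetP [y]; by rewrite inE.
    right.
    have [m mE] : exists m, m \in E.
      apply: NNPP => h; apply: En0; apply/fsetP => x; rewrite inE.
      apply/negbTE/negP => xE; apply: h; by exists x.
    split.
      move=> h; have : addn m n0 \in shiftf n0 E by apply/imfsetP; exists m.
      by rewrite h inE.
    have [m0 [m0E m0min]] : exists m0, m0 \in E /\ forall x, x \in E -> m0 <= x.
      have Hex : exists n, n \in E by exists m.
      exists (ex_minn Hex); case: ex_minnP => j jE jmin; split=> //.
    exists (addn m0 n0); split; first by apply/imfsetP; exists m0.
    split.
      move=> x /imfsetP [y /= yE ->]; rewrite leq_add2r; exact: m0min.
    exists c; split.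
      by rewrite addnC; apply: (A_mono HA La).
    exact: (F_shift Hom HA HF).
  have := IHa c (Hlt _ _ cA) Hgc.
  case=> [h|h].
    exact: (irr c (tr _ _ _ h dc)).
  by subst c; apply: (irr d dc).
Qed.
Lemma branch (Acal : {fset nat} -> Prop) (P : nat -> Prop) (S : nat -> {fset nat}) :
  hereditary Acal -> S 0 = fset0 -> (forall k, child Acal P (S k.+1) (S k)) ->
  exists L : nat -> Prop, infinite_set L /\ (forall n, L n -> P n) /\
    (forall E : {fset nat}, (forall x, x \in E -> L x) -> Acal E).
Proof.
move=> Her S0 HS.
have Pm : forall k x, x \in S k -> P x.
  elim=> [|k IH] x; first by rewrite S0 inE.
  have [n [Pn [_ [_ ->]]]] := HS k.
  by case/fset1UP => [->//|]; apply: IH.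
have mono : forall j i x, x \in S j -> x \in S (addn j i).
  move=> j; elim=> [|i IH] x xS; first by rewrite addn0.
  rewrite addnS; have [n [_ [_ [_ ->]]]] := HS (addn j i).
  by apply: fset1Ur; apply: IH.
have C : forall k x, x \in S k.+1 -> x \notin S k -> k <= x.
  elim=> [//|k IH] x.
  have [n [_ [nb [_ ->]]]] := HS k.+1.
  case/fset1UP => [->|h /negP//] _.
  have [m [_ [mb [_ Em]]]] := HS k.
  have mS : m \in S k.+1 by rewrite Em fset1U1.
  have mn : m \notin S k by apply/negP => /mb; rewrite ltnn.
  exact: leq_ltn_trans (IH _ mS mn) (nb _ mS).
have Ex : forall k x, x \in S k -> x \in S x.+1.
  elim=> [|k IH] x; first by rewrite S0 inE.
  move=> xS; case: (boolP (x \in S k)) => [/IH//|xn].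
  have kx := C _ _ xS xn.
  have := mono k.+1 (subn x k) x xS.
  by rewrite addSn subnKC.
exists (fun x => x \in S x.+1); split; last split.
- move=> m; have [n [_ [nb [_ Em]]]] := HS m.
  have nS : n \in S m.+1 by rewrite Em fset1U1.
  have nn : n \notin S m by apply/negP => /nb; rewrite ltnn.
  exists n; split; first exact: C nS nn.
  exact: Ex nS.
- move=> n; exact: Pm.
- move=> E HE; pose M := \max_(i <- E) i.
  have Hsub : E `<=` S M.+1.
    apply/fsubsetP => x xE.
    have xM := max_ge xE.
    have := mono x.+1 (subn M x) x (HE x xE).
    by rewrite addSn subnKC.
  apply: Her Hsub.
  by have [n [_ [_ [HA ->]]]] := HS M.
Qed.

Lemma step_nacc (R : {fset nat} -> {fset nat} -> Prop) s :
  ~ Acc R s -> exists t, R t s /\ ~ Acc R t.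
Proof.
move=> h; apply: NNPP => h2; apply: h; constructor => t Rt.
apply: NNPP => nt; apply: h2; by exists t.
Qed.

Theorem corollary4p5 (O : Type) (lt : O -> O -> Prop)
  (A : O -> nat -> List.list O) (F : O -> {fset nat} -> Prop)
  (Acal : {fset nat} -> Prop) (P : nat -> Prop) :
  is_omega1 lt ->
  approximating_family lt A ->
  is_transfinite_family lt A F ->
  hereditary Acal ->
  infinite_set P ->
  (forall a : O, exists e : nat -> nat,
      (forall i, e i < e i.+1) /\ (forall i, P (e i)) /\
      spread_subset e (F a) Acal) ->
  exists L : nat -> Prop, infinite_set L /\ (forall n, L n -> P n) /\
    (forall E : {fset nat}, (forall x, x \in E -> L x) -> Acal E).
Proof.
move=> Hom HA HF Her HP Hyp.
have [o0 _] : exists o0 : O, True.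
  apply: NNPP => h; case: Hom => [_ [_ [_ [_ [unc _]]]]]; apply: unc.
  by exists (fun _ => 0) => x; exfalso; apply: h; exists x.
case: (classic (Acc (child Acal P) fset0)) => Hacc.
  exfalso.
  have [d Hd] := main o0 Hom HA HF Hacc.
  have [d' Hd'] := bound Hom (fun _ => d).
  have Hg : Hgood F Acal P d' fset0.
    have [e [He [Pe Hs]]] := Hyp d'.
    exists e; split=> //; split=> // E FE; rewrite fset0U; exact: Hs.
  have Hdd := Hd' 0; case: Hom => [irr [tr _]].
  case: (Hd d' Hg) => [h|h].
    exact: (irr d (tr _ _ _ Hdd h)).
  by subst d'; exact: (irr d Hdd).
pose B := {s : {fset nat} | ~ Acc (child Acal P) s}.
have Hnext : forall b : B, exists b' : B, child Acal P (proj1_sig b') (proj1_sig b).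
  move=> [s ns]; have [t [Rt nt]] := step_nacc ns.
  by exists (exist _ t nt).
pose next (b : B) := proj1_sig (constructive_indefinite_description _ (Hnext b)).
have nextP : forall b, child Acal P (proj1_sig (next b)) (proj1_sig b).
  move=> b; exact: (proj2_sig (constructive_indefinite_description _ (Hnext b))).
pose b0 : B := exist _ fset0 Hacc.
apply: (@branch Acal P (fun k => proj1_sig (iter k next b0))) => //.
move=> k; exact: nextP.
Qed.
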